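(* Let $n\ge3$ and $k\ge0$ be integers with $k<n\le 2k$. If $S\subseteq\mathrm{Inc}(A,B)$ is an independent set in $G_n^k$ that is not reversible, then \[|S|\le 2+\frac{(2k+2-n)(2k+1-n)}{2}.\]
   Context: For integers $n\ge3$, $k\ge0$, the crown $S_n^k$ is the poset with ground set $A\cup B$, $A=\{a_1,\dots,a_{n+k}\}$, $B=\{b_1,\dots,b_{n+k}\}$, indices cyclic modulo $n+k$; elements of $A$ are pairwise incomparable, as are elements of $B$, and $a_i$ is incomparable to $b_j$ when $j\in\{i,i+1,\dots,i+k\}$ (mod $n+k$), while $a_i<b_j$ otherwise. $\mathrm{Inc}(A,B)$ is the set of pairs $(a,b)\in A\times B$ with $a$ incomparable to $b$. The graph $G_n^k$ has vertex set $\mathrm{Inc}(A,B)$, with $(a,b)$ adjacent to $(x,y)$ iff $a<y$ and $x<b$ in $S_n^k$. A set $R\subseteq\mathrm{Inc}(A,B)$ is reversible if there is a linear extension $L$ of $S_n^k$ with $b<a$ in $L$ for all $(a,b)\in R$. *)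

(* Defs.v *)
From mathcomp Require Import all_boot all_order.
Set Implicit Arguments. Unset Strict Implicit. Unset Printing Implicit Defensive.

(* Crown S_n^k with N = n+k: ground set A + B, a_i = inl i, b_j = inr j,
   i, j : 'I_(n+k). *)
Definition crown (n k : nat) : finType := ('I_(n + k) + 'I_(n + k))%type.

Definition cdist (N : nat) (i j : 'I_N) : nat := (j + N - i) %% N.

(* a_i is incomparable to b_j iff j in {i, i+1, ..., i+k} mod (n+k) *)
Definition incAB (n k : nat) (i j : 'I_(n + k)) : bool := cdist i j <= k.
Arguments incAB : clear implicits.

Definition crown_lt (n k : nat) (x y : crown n k) : bool :=
  match x, y with
  | inl i, inr j => ~~ incAB n k i j
  | _, _ => false
  end.

(* Inc(A,B), as pairs of indices (i,j) standing for (a_i, b_j) *)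
Definition Inc (n k : nat) : {set 'I_(n + k) * 'I_(n + k)} :=
  [set p | incAB n k p.1 p.2].

Definition Gadj (n k : nat) (u v : 'I_(n + k) * 'I_(n + k)) : bool :=
  crown_lt (inl u.1 : crown n k) (inr v.2) && crown_lt (inl v.1 : crown n k) (inr u.2).

Definition independent (n k : nat) (S : {set 'I_(n + k) * 'I_(n + k)}) : Prop :=
  S \subset Inc n k /\ forall u v, u \in S -> v \in S -> ~~ Gadj u v.

Definition linear_extension (n k : nat) (L : rel (crown n k)) : Prop :=
  [/\ reflexive L, antisymmetric L, transitive L, total L &
      forall x y, crown_lt x y -> L x y].

Definition reversible (n k : nat) (R : {set 'I_(n + k) * 'I_(n + k)}) : Prop :=
  exists L : rel (crown n k), linear_extension L /\
    forall p, p \in R -> L (inr p.2) (inl p.1) && (inr p.2 != inl p.1 :> crown n k).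

(* Main.v *)
Require Import Defs.
From mathcomp Require Import all_boot all_order zify.
Set Implicit Arguments. Unset Strict Implicit. Unset Printing Implicit Defensive.

Definition cd (N x y : nat) : nat := if x <= y then y - x else y + N - x.

Lemma cd_nw N k x y : x + k < N -> y < N -> (cd N x y <= k) = (x <= y <= x + k).
Proof. move=> h hy; rewrite /cd; case: (leqP x y) => h2 /=; apply/idP/idP; lia. Qed.
Lemma cd_w N k x y : x < N -> N <= x + k -> y < N -> (cd N x y <= k) = (x <= y) || (y + N <= x + k).
Proof. move=> hx h hy; rewrite /cd; case: (leqP x y) => h2 /=; apply/idP/idP; lia. Qed.

Ltac wsplit N k x := case: (ltnP (x + k) N) => ?;
  [ rewrite ?(@cd_nw N k x) // | rewrite ?(@cd_w N k x) // ].

Lemma path4 N k a1 b1 a2 b2 a3 b3 b4 :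
  2*k+1 <= N -> a1 < N -> a2 < N -> b2 < N -> a3 < N -> b3 < N -> b1 < N -> b4 < N ->
  k < cd N a1 b2 -> cd N a1 b1 <= k -> cd N a1 b3 <= k -> cd N a1 b4 <= k ->
  cd N a2 b1 <= k -> cd N a2 b2 <= k -> cd N a2 b4 <= k -> k < cd N a2 b3 ->
  cd N a3 b1 <= k -> cd N a3 b2 <= k -> cd N a3 b3 <= k -> k < cd N a3 b4 -> False.
Proof.
move=> ? ? ? ? ? ? ? ?; rewrite !ltnNge.
wsplit N k a1; wsplit N k a2; wsplit N k a3; lia.
Qed.
Lemma orientA n k a1 b1 a2 b2 a3 :
  k < n -> 0 < k -> a1 < n + k -> b1 < n + k -> a2 < n + k -> b2 < n + k -> a3 < n + k ->
  cd (n+k) a1 b1 <= k -> cd (n+k) a2 b2 <= k -> cd (n+k) a3 k <= k ->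
  k < cd (n+k) a1 b2 -> k < cd (n+k) a2 k -> k < cd (n+k) a3 b1 ->
  cd (n+k) a2 b1 <= k -> cd (n+k) a3 b2 <= k -> cd (n+k) a1 k <= k ->
  (b1 < k < b2 /\ b2 <= 2*k /\ n + k + b1 <= b2 + k /\ a1 <= b1 /\ b2 - k <= a3 <= k /\ n + b1 <= a2 <= b2)
  \/ (b2 < k < b1 /\ b1 <= 2*k /\ b1 - k <= a1 <= k /\ b2 + n <= a2 <= b1 /\ a3 <= b2).
Proof.
move=> ? ? ? ? ? ? ?; rewrite !ltnNge.
have ? : k < n + k by lia.
wsplit (n+k) k a1; wsplit (n+k) k a2; wsplit (n+k) k a3; lia.
Qed.
Definition revF n k a1 b1 a2 b2 a3 :=
  b1 < k < b2 /\ b2 <= 2*k /\ n + k + b1 <= b2 + k /\ a1 <= b1 /\ b2 - k <= a3 <= k /\ n + b1 <= a2 <= b2.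

Lemma blockB n k a1 b1 a2 b2 a3 a b :
  k < n -> 0 < k -> a < n + k -> b < n + k -> a2 < n + k ->
  revF n k a1 b1 a2 b2 a3 ->
  cd (n+k) a b <= k ->
  (cd (n+k) a b1 <= k \/ cd (n+k) a1 b <= k) ->
  (cd (n+k) a b2 <= k \/ cd (n+k) a2 b <= k) ->
  (cd (n+k) a k <= k \/ cd (n+k) a3 b <= k) ->
  (a <= b <= b2 - n) \/ (b2 - k <= a /\ a <= b <= k + b1) \/ (n + b1 <= a /\ a <= b <= 2*k).
Proof.
rewrite /revF => ? ? ? ? ? [? [? [? [? [? ?]]]]].
have ? : k < n + k by lia.
rewrite (@cd_nw (n+k) k a1) ?(@cd_nw (n+k) k a3) ?(@cd_w (n+k) k a2); try lia.
wsplit (n+k) k a; lia.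
Qed.
Lemma cross01 n k b1 b2 al be al' be' t t' c c' :
  k < n -> n <= 2*k -> b1 < k < b2 -> b2 <= 2*k -> n + b1 <= b2 ->
  al <= t -> t + c <= be -> c <= 1 -> be <= b2 - n ->
  al' <= t' -> t' + c' <= be' -> c' <= 1 -> b2 - k + be' <= k + b1 ->
  (2*t + c = 2*((b2 - n + 1) + t') + c' \/ 2*t + c = 2*((b2 - n + 1) + t') + c' + (4*k+3-2*n)
     \/ 2*((b2 - n + 1) + t') + c' = 2*t + c + (4*k+3-2*n)) ->
  k < cd (n+k) al (b2 - k + be') /\ k < cd (n+k) (b2 - k + al') be.
Proof. move=> *; rewrite /cd; do 2 case: ifP => ?; lia. Qed.

Lemma cross02 n k b1 b2 al be al' be' t t' c c' :
  k < n -> n <= 2*k -> b1 < k < b2 -> b2 <= 2*k -> n + b1 <= b2 ->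
  al <= t -> t + c <= be -> c <= 1 -> be <= b2 - n ->
  al' <= t' -> t' + c' <= be' -> c' <= 1 -> n + b1 + be' <= 2*k ->
  (2*t + c = 2*((b2 - n + 1) + (2*k + b1 - b2 + 1) + t') + c' \/ 2*t + c = 2*((b2 - n + 1) + (2*k + b1 - b2 + 1) + t') + c' + (4*k+3-2*n)
     \/ 2*((b2 - n + 1) + (2*k + b1 - b2 + 1) + t') + c' = 2*t + c + (4*k+3-2*n)) ->
  k < cd (n+k) al (n + b1 + be') /\ k < cd (n+k) (n + b1 + al') be.
Proof. move=> *; rewrite /cd; do 2 case: ifP => ?; lia. Qed.

Lemma cross12 n k b1 b2 al be al' be' t t' c c' :
  k < n -> n <= 2*k -> b1 < k < b2 -> b2 <= 2*k -> n + b1 <= b2 ->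
  al <= t -> t + c <= be -> c <= 1 -> b2 - k + be <= k + b1 ->
  al' <= t' -> t' + c' <= be' -> c' <= 1 -> n + b1 + be' <= 2*k ->
  (2*((b2 - n + 1) + t) + c = 2*((b2 - n + 1) + (2*k + b1 - b2 + 1) + t') + c' \/ 2*((b2 - n + 1) + t) + c = 2*((b2 - n + 1) + (2*k + b1 - b2 + 1) + t') + c' + (4*k+3-2*n)
     \/ 2*((b2 - n + 1) + (2*k + b1 - b2 + 1) + t') + c' = 2*((b2 - n + 1) + t) + c + (4*k+3-2*n)) ->
  k < cd (n+k) (b2 - k + al) (n + b1 + be') /\ k < cd (n+k) (n + b1 + al') (b2 - k + be).
Proof. move=> *; rewrite /cd; do 2 case: ifP => ?; lia. Qed.

Section Basic.
Variables n k : nat.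
Local Notation N := (n + k).
Local Notation P := ('I_N * 'I_N)%type.

Lemma cdistE (i j : 'I_N) : cdist i j = cd N i j.
Proof.
rewrite /cdist /cd; case: (leqP i j) => h.
- have -> : j + N - i = (j - i) + N by have := ltn_ord i; lia.
  rewrite modnDr modn_small //; have := ltn_ord j; lia.
- rewrite modn_small //; have := ltn_ord i; have := ltn_ord j; lia.
Qed.

Lemma incE (i j : 'I_N) : incAB n k i j = (cd N i j <= k).
Proof. by rewrite /incAB cdistE. Qed.

Definition R (u v : P) : bool := ~~ incAB n k u.1 v.2.

Lemma GadjE (u v : P) : Gadj u v = R u v && R v u.
Proof. by []. Qed.

Lemma indepP (S : {set P}) : independent S ->
  (forall u, u \in S -> incAB n k u.1 u.2) /\
  (forall u v, u \in S -> v \in S -> ~~ (R u v && R v u)).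
Proof.
case=> sub hg; split=> [u uS|u v uS vS]; last by rewrite -GadjE hg.
by have := subsetP sub u uS; rewrite inE.
Qed.

Lemma R_irr (S : {set P}) u : independent S -> u \in S -> ~~ R u u.
Proof. by move=> /indepP [h _] uS; rewrite /R negbK h. Qed.

Definition no3 (S : {set P}) := forall p q r, p \in S -> q \in S -> r \in S ->
  R p q -> R q r -> R r p -> False.

Definition Q (S : {set P}) (u v : P) : bool := R u v || [exists z in S, R u z && R z v].

Lemma path4P (x z v p : P) :
  k < n -> incAB n k x.1 x.2 -> incAB n k z.1 z.2 -> incAB n k v.1 v.2 ->
  R x z -> R z v -> R v p -> ~~ R z x -> ~~ R v z -> ~~ R v x ->
  R x v || R z p || R x p.
Proof.
move=> hkn ix iz iv; rewrite /R !incE in ix iz iv *.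
move=> h1 h2 h3 h4 h5 h6.
apply/negPn/negP; rewrite !negb_or !negbK => /andP [/andP [h7 h8] h9].
rewrite -!ltnNge in h1 h2 h3.
apply: (@path4 N k x.1 x.2 z.1 z.2 v.1 v.2 p.2) => //; try lia.
Qed.

Lemma Q_R (S : {set P}) x v p : k < n -> independent S -> no3 S ->
  x \in S -> v \in S -> p \in S -> Q S x v -> R v p -> Q S x p.
Proof.
move=> hkn hS h3 xS vS pS /orP [hxv|/existsP [z /andP [zS /andP [hxz hzv]]]] hvp.
  by apply/orP; right; apply/existsP; exists v; rewrite vS hxv hvp.
have [iS gS] := indepP hS.
have := @path4P x z v p hkn (iS x xS) (iS z zS) (iS v vS) hxz hzv hvp.
have nzx : ~~ R z x by have := gS x z xS zS; rewrite hxz.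
have nvz : ~~ R v z by have := gS z v zS vS; rewrite hzv.
have nvx : ~~ R v x by apply/negP => hvx; apply: (h3 x z v).
move=> /(_ nzx nvz nvx) /orP [/orP [hxv|hzp]|hxp].
- by apply/orP; right; apply/existsP; exists v; rewrite vS hxv hvp.
- by apply/orP; right; apply/existsP; exists z; rewrite zS hxz hzp.
- by rewrite /Q hxp.
Qed.

Lemma Q_irr (S : {set P}) v : independent S -> v \in S -> ~~ Q S v v.
Proof.
move=> hS vS; rewrite /Q negb_or (R_irr hS vS) /=; apply/existsP => [[z /andP [zS hz]]].
have [_ gS] := indepP hS; by have := gS v z vS zS; rewrite hz.
Qed.

Definition rho (S : {set P}) (u : P) := #|[set v in S | Q S v u]|.

Lemma rho_lt (S : {set P}) v p : k < n -> independent S -> no3 S ->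
  v \in S -> p \in S -> R v p -> rho S v < rho S p.
Proof.
move=> hkn hS h3 vS pS hvp; apply: proper_card; apply/properP; split.
  apply/subsetP => x; rewrite !inE => /andP [xS hx]; rewrite xS /=.
  exact: (Q_R hkn hS h3 xS vS pS hx hvp).
exists v; rewrite !inE vS /= ?(negbTE (Q_irr hS vS)) //.
by rewrite /Q hvp.
Qed.

Definition ha (S : {set P}) (i : 'I_N) := \max_(u in S | u.1 == i) (rho S u).+1.*2.
Definition hb (S : {set P}) (j : 'I_N) := (\max_(u in S | ~~ incAB n k u.1 j) (rho S u).+1.*2).+1.
Definition hh (S : {set P}) (x : crown n k) : nat :=
  match x with inl i => ha S i | inr j => hb S j end.

Lemma hab (S : {set P}) i j : ~~ incAB n k i j -> ha S i < hb S j.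
Proof.
move=> hij; rewrite /ha /hb ltnS; apply/bigmax_leqP => u /andP [uS /eqP u1].
by apply: leq_bigmax_cond; rewrite uS u1 hij.
Qed.

Lemma hba (S : {set P}) p : k < n -> independent S -> no3 S -> p \in S -> hb S p.2 < ha S p.1.
Proof.
move=> hkn hS h3 pS; rewrite /hb.
have hm : \max_(u in S | ~~ incAB n k u.1 p.2) (rho S u).+1.*2 <= (rho S p).*2.
  apply/bigmax_leqP => v /andP [vS hv].
  have := rho_lt hkn hS h3 vS pS hv; rewrite -!muln2; lia.
have ha1 : (rho S p).+1.*2 <= ha S p.1 by apply: leq_bigmax_cond; rewrite pS eqxx.
move: ha1; rewrite -!muln2; lia.
Qed.

Definition Lrel (S : {set P}) : rel (crown n k) := fun x y =>
  (hh S x < hh S y) || ((hh S x == hh S y) && (enum_rank x <= enum_rank y)).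

Lemma Lrel_ext (S : {set P}) : linear_extension (Lrel S).
Proof.
split.
- by move=> x; rewrite /Lrel eqxx leqnn orbT.
- move=> x y /andP [h1 h2]; move: h1 h2; rewrite /Lrel.
  case: (ltngtP (hh S x) (hh S y)) => /= [h|h|h]; rewrite ?eqxx ?h /=.
  + by [].
  + by [].
  + move=> h1 h2; apply: enum_rank_inj; apply: val_inj; apply/eqP; by rewrite eqn_leq h1 h2.
- move=> y x z; rewrite /Lrel.
  case: (ltngtP (hh S x) (hh S y)) => /= h1;
  case: (ltngtP (hh S y) (hh S z)) => /= h2 //.
  + by rewrite (ltn_trans h1 h2).
  + by rewrite -h2 h1.
  + by rewrite h1 h2.
  + rewrite h1 h2 eqxx ltnn /=; exact: leq_trans.
- move=> x y; rewrite /Lrel; case: (ltngtP (hh S x) (hh S y)) => //= _.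
  exact: leq_total.
- case=> [i|j] [i'|j'] //= hij; apply/orP; left; exact: hab.
Qed.

Lemma rev_of_no3 (S : {set P}) : k < n -> independent S -> no3 S -> reversible S.
Proof.
move=> hkn hS h3; exists (Lrel S); split; first exact: Lrel_ext.
move=> p pS; rewrite /Lrel /=; by rewrite (hba hkn hS h3 pS).
Qed.

Lemma cycle_of_nonrev (S : {set P}) : k < n -> independent S -> ~ reversible S ->
  exists p q r, [/\ p \in S, q \in S, r \in S & [/\ R p q, R q r & R r p]].
Proof.
move=> hkn hS hnr.
case: (boolP [exists p in S, exists q in S, exists r in S, R p q && R q r && R r p]).
  move=> /existsP [p /andP [pS /existsP [q /andP [qS /existsP [r /andP [rS /andP [/andP [h1 h2] h3]]]]]]].
  by exists p, q, r.
move=> hn; exfalso; apply: hnr; apply: rev_of_no3 => // p q r pS qS rS h1 h2 h3.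
move/negP: hn; apply; apply/existsP; exists p; rewrite pS; apply/existsP; exists q; rewrite qS.
by apply/existsP; exists r; rewrite rS h1 h2 h3.
Qed.

End Basic.
Arguments R : clear implicits.
Arguments no3 : clear implicits.

Lemma modnNN a N : a < N + N -> a %% N = if a < N then a else a - N.
Proof.
move=> h; case: ifP => h2; first by rewrite modn_small.
have -> : a = (a - N) + N by lia.
rewrite modnDr modn_small; lia.
Qed.

Lemma cd_char N x y : x < N -> y < N -> (x + cd N x y) %% N = y.
Proof.
move=> hx hy; rewrite /cd; case: (leqP x y) => h.
  rewrite modn_small; lia.
rewrite modnNN; last lia. case: ifP => h2; lia.
Qed.

Lemma cd_uniq N x y d : x < N -> y < N -> d < N -> (x + d) %% N = y -> cd N x y = d.
Proof.
move=> hx hy hd; rewrite modnNN; last lia.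
rewrite /cd; case: ifP => h1 h2; case: (leqP x y) => h3; lia.
Qed.


Lemma cd_rot N c x y : x < N -> y < N ->
  cd N ((x + c) %% N) ((y + c) %% N) = cd N x y.
Proof.
move=> hx hy; have Np : 0 < N by lia.
have hd : cd N x y < N by rewrite /cd; case: ifP; lia.
apply: cd_uniq; rewrite ?ltn_pmod //.
rewrite modnDml -addnA (addnC c) addnA -modnDml cd_char //.
Qed.

Lemma cd_th N k x y : x < N -> y < N -> k < N ->
  (cd N y ((x + k) %% N) <= k) = (cd N x y <= k).
Proof.
move=> hx hy hk; have Np : 0 < N by lia.
have hd : cd N x y < N by rewrite /cd; case: ifP; lia.
have hc := cd_char hx hy.
move: (cd N x y) hd hc => d hd hc.
case: (leqP d k) => h.
- have -> : cd N y ((x + k) %% N) = k - d.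
    apply: cd_uniq => //; [exact: ltn_pmod | lia | ].
    rewrite -hc modnDml -addnA; congr (_ %% N); lia.
  lia.
- have -> : cd N y ((x + k) %% N) = N + k - d.
    apply: cd_uniq => //; [exact: ltn_pmod | lia | ].
    rewrite -hc modnDml -addnA.
    have -> : x + (d + (N + k - d)) = (x + k) + N by lia.
    by rewrite modnDr.
  lia.
Qed.

Section Maps.
Variables n k : nat.
Variable Npos : 0 < n + k.
Local Notation N := (n + k).
Local Notation P := ('I_N * 'I_N)%type.

Definition addc (c : nat) (i : 'I_N) : 'I_N := Ordinal (ltn_pmod (i + c) Npos).

Lemma addc_inj c : injective (addc c).
Proof.
move=> i j /(congr1 val) /= /eqP; rewrite eqn_modDr => /eqP.
by rewrite !modn_small // => /val_inj.
Qed.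

Lemma inc_addc c i j : incAB n k (addc c i) (addc c j) = incAB n k i j.
Proof. by rewrite !incE /= cd_rot. Qed.

Definition rotp c (p : P) : P := (addc c p.1, addc c p.2).
Definition thp (p : P) : P := (p.2, addc k p.1).

Lemma rotp_inj c : injective (rotp c).
Proof. move=> [a b] [a' b'] h; move: (congr1 fst h) (congr1 snd h) => /= h1 h2. by rewrite (addc_inj h1) (addc_inj h2). Qed.

Lemma thp_inj : injective thp.
Proof. move=> [a b] [a' b'] h; move: (congr1 fst h) (congr1 snd h) => /= h1 h2. by rewrite h1 (addc_inj h2). Qed.

Lemma R_rot c u v : R n k (rotp c u) (rotp c v) = R n k u v.
Proof. by rewrite /R /= inc_addc. Qed.

Lemma inc_th (i j : 'I_N) : k < N -> incAB n k j (addc k i) = incAB n k i j.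
Proof. by move=> hk; rewrite !incE /= cd_th. Qed.

Lemma R_th u v : k < N -> R n k (thp u) (thp v) = R n k v u.
Proof. by move=> hk; rewrite /R /= inc_th. Qed.

Lemma transfer (f : P -> P) (S : {set P}) : injective f ->
  (forall p, incAB n k (f p).1 (f p).2 = incAB n k p.1 p.2) ->
  (forall u v, R n k (f u) (f v) && R n k (f v) (f u) = R n k u v && R n k v u) ->
  independent S -> independent (f @: S) /\ #|f @: S| = #|S|.
Proof.
move=> finj finc fR [sub hg]; split; last exact: card_imset.
split.
  apply/subsetP => x /imsetP [p pS ->]; rewrite inE finc.
  by have := subsetP sub p pS; rewrite inE.
move=> x y /imsetP [u uS ->] /imsetP [v vS ->]; rewrite GadjE fR -GadjE; exact: hg.
Qed.

End Maps.

Lemma ar_hb3 N k x : x < N -> k < N -> (x + (N - x + k)) %% N = k.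
Proof. move=> hx hk; have -> : x + (N - x + k) = k + N by lia. by rewrite modnDr modn_small. Qed.

Lemma ar_hc3 N k x : x < N -> k < N -> ((x + k) %% N + (N - x)) %% N = k.
Proof.
move=> hx hk; rewrite modnDml; have -> : x + k + (N - x) = k + N by lia.
by rewrite modnDr modn_small.
Qed.

Lemma ar_hc1 n k a1 a2 b2 : k < n -> a1 <= k -> b2 + n <= a2 -> a2 < n + k -> a2 <= a1 + k ->
  ((a1 + k) %% (n + k) + (n + k - a2)) %% (n + k) < k.
Proof.
move=> *; rewrite (@modn_small (a1 + k)); last lia.
have -> : a1 + k + (n + k - a2) = (a1 + k - a2) + (n + k) by lia.
rewrite modnDr modn_small; lia.
Qed.

Definition fwdF' n k (a1 b1 a2 b2 a3 : nat) :=
  b2 < k < b1 /\ b1 <= 2*k /\ b1 - k <= a1 <= k /\ b2 + n <= a2 <= b1 /\ a3 <= b2.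

Lemma ar_hc1' n k a1 b1 a2 b2 a3 : k < n -> fwdF' n k a1 b1 a2 b2 a3 -> a2 < n + k ->
  ((a1 + k) %% (n + k) + (n + k - a2)) %% (n + k) < k.
Proof. move=> h [? [? [? [? ?]]]] ?; apply: (@ar_hc1 n k a1 a2 b2); lia. Qed.

Lemma ar_contra n k (a1 b1 a2 b2 a3 : nat) : fwdF' n k a1 b1 a2 b2 a3 -> b1 < k -> False.
Proof. move=> [? ?]; lia. Qed.

Section Reduce.
Variables n k : nat.
Local Notation N := (n + k).
Local Notation P := ('I_N * 'I_N)%type.

Local Notation fwdF := (fwdF' n k).

Lemma orient_cycle (S : {set P}) (u1 u2 u3 : P) :
  k < n -> 0 < k -> independent S -> u1 \in S -> u2 \in S -> u3 \in S ->
  R n k u1 u2 -> R n k u2 u3 -> R n k u3 u1 -> (u3.2 : nat) = k ->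
  revF n k u1.1 u1.2 u2.1 u2.2 u3.1 \/ fwdF u1.1 u1.2 u2.1 u2.2 u3.1.
Proof.
move=> hkn hk0 hS h1 h2 h3 r12 r23 r31 hb3.
have [iS gS] := indepP hS.
have n21 : ~~ R n k u2 u1 by have := gS _ _ h1 h2; rewrite r12.
have n32 : ~~ R n k u3 u2 by have := gS _ _ h2 h3; rewrite r23.
have n13 : ~~ R n k u1 u3 by have := gS _ _ h3 h1; rewrite r31.
have i1 := iS _ h1; have i2 := iS _ h2; have i3 := iS _ h3.
move: r12 r23 r31 n21 n32 n13 i1 i2 i3; rewrite /R !negbK !incE -!ltnNge hb3 => *.
have := @orientA n k u1.1 u1.2 u2.1 u2.2 u3.1 hkn hk0 (ltn_ord _) (ltn_ord _) (ltn_ord _) (ltn_ord _) (ltn_ord _).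
rewrite /revF /fwdF; move=> /(_ _ _ _ _ _ _ _ _ _) H; apply: H => //.
Qed.


Lemma addc_val (Np : 0 < N) c (i : 'I_N) : (addc Np c i : nat) = (i + c) %% N.
Proof. by []. Qed.

Lemma R_rot2 (Np : 0 < N) c u v :
  R n k (rotp Np c u) (rotp Np c v) && R n k (rotp Np c v) (rotp Np c u) = R n k u v && R n k v u.
Proof. by rewrite !R_rot. Qed.
Lemma R_th2 (Np : 0 < N) u v : k < N ->
  R n k (thp Np u) (thp Np v) && R n k (thp Np v) (thp Np u) = R n k u v && R n k v u.
Proof. by move=> hk; rewrite !R_th // andbC. Qed.
Lemma inc_rot (Np : 0 < N) c p : incAB n k (rotp Np c p).1 (rotp Np c p).2 = incAB n k p.1 p.2.
Proof. exact: inc_addc. Qed.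
Lemma inc_th2 (Np : 0 < N) p : k < N -> incAB n k (thp Np p).1 (thp Np p).2 = incAB n k p.1 p.2.
Proof. move=> hk; exact: inc_th. Qed.

Lemma reduce (S : {set P}) (p q r : P) :
  3 <= n -> k < n -> n <= 2 * k -> independent S ->
  p \in S -> q \in S -> r \in S -> R n k p q -> R n k q r -> R n k r p ->
  exists (S' : {set P}) (u1 u2 u3 : P), [/\ independent S', #|S'| = #|S|,
    [/\ u1 \in S', u2 \in S' & u3 \in S'],
    [/\ R n k u1 u2, R n k u2 u3 & R n k u3 u1] &
    (u3.2 : nat) = k /\ revF n k u1.1 u1.2 u2.1 u2.2 u3.1].
Proof.
move=> hn hkn hn2 hS pS qS rS rpq rqr rrp.
have Np : 0 < N by lia.
have hk0 : 0 < k by lia.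
have hkN : k < N by lia.
pose c := N - r.2 + k.
have [hS1 cS1] := @transfer n k (rotp Np c) S (@rotp_inj n k Np c)
   (inc_rot Np c) (R_rot2 Np c) hS.
have w1S : rotp Np c p \in rotp Np c @: S by apply: imset_f.
have w2S : rotp Np c q \in rotp Np c @: S by apply: imset_f.
have w3S : rotp Np c r \in rotp Np c @: S by apply: imset_f.
have hb3 : ((rotp Np c r).2 : nat) = k.
  by rewrite /= ?addc_val /c ar_hb3.
have r12 : R n k (rotp Np c p) (rotp Np c q) by rewrite R_rot.
have r23 : R n k (rotp Np c q) (rotp Np c r) by rewrite R_rot.
have r31 : R n k (rotp Np c r) (rotp Np c p) by rewrite R_rot.
case: (orient_cycle hkn hk0 hS1 w1S w2S w3S r12 r23 r31 hb3) => [hrev|hfwd].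
  by exists (rotp Np c @: S), (rotp Np c p), (rotp Np c q), (rotp Np c r); split.
move: (rotp Np c @: S) hS1 cS1 w1S w2S w3S hb3 r12 r23 r31 hfwd.
move: (rotp Np c p) (rotp Np c q) (rotp Np c r) => w1 w2 w3 S1 hS1 cS1 w1S w2S w3S hb3 r12 r23 r31 hfwd.
have [hS2 cS2] := @transfer n k (@thp n k Np) S1 (@thp_inj n k Np)
   (fun p => inc_th2 Np p hkN) (fun u v => R_th2 Np u v hkN) hS1.
pose c' := N - w2.1.
have [hS3 cS3] := @transfer n k (rotp Np c') _ (@rotp_inj n k Np c')
   (inc_rot Np c') (R_rot2 Np c') hS2.
pose v1 := rotp Np c' (thp Np w1); pose v2 := rotp Np c' (thp Np w3); pose v3 := rotp Np c' (thp Np w2).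
have v1S : v1 \in rotp Np c' @: (thp Np @: S1) by apply: imset_f; apply: imset_f.
have v2S : v2 \in rotp Np c' @: (thp Np @: S1) by apply: imset_f; apply: imset_f.
have v3S : v3 \in rotp Np c' @: (thp Np @: S1) by apply: imset_f; apply: imset_f.
have s12 : R n k v1 v2 by rewrite /v1 /v2 R_rot R_th.
have s23 : R n k v2 v3 by rewrite /v2 /v3 R_rot R_th.
have s31 : R n k v3 v1 by rewrite /v3 /v1 R_rot R_th.
have hw21 := ltn_ord w2.1.
have hc3 : (v3.2 : nat) = k.
  by rewrite /v3 /= ?addc_val /c' ar_hc3.
have hc1 : (v1.2 : nat) < k.
  rewrite /v1 /= ?addc_val /c'.
  exact: (ar_hc1' hkn hfwd (ltn_ord w2.1)).
case: (orient_cycle hkn hk0 hS3 v1S v2S v3S s12 s23 s31 hc3) => [hrev|hfwd2].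
  exists (rotp Np c' @: (thp Np @: S1)), v1, v2, v3; split => //.
  by rewrite cS3 cS2.
exfalso; exact: (ar_contra hfwd2 hc1).
Qed.

End Reduce.

Section PB.
Variable B : nat.
Local Notation P := ('I_B * 'I_B)%type.

Definition Cov (Y : {set P}) : {set 'I_B} :=
  [set t : 'I_B | [exists p in Y, (p.1 <= t) && (t <= p.2)]].
Definition Br (Y : {set P}) : {set 'I_B} :=
  [set t : 'I_B | [exists p in Y, (p.1 <= t) && (t < p.2)]].

Lemma Cov_sub (Y Z : {set P}) : Y \subset Z -> Cov Y \subset Cov Z.
Proof.
move=> /subsetP h; apply/subsetP => t; rewrite !inE => /existsP [p /andP [pY hp]].
by apply/existsP; exists p; rewrite (h p pY).
Qed.
Lemma Br_sub (Y Z : {set P}) : Y \subset Z -> Br Y \subset Br Z.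
Proof.
move=> /subsetP h; apply/subsetP => t; rewrite !inE => /existsP [p /andP [pY hp]].
by apply/existsP; exists p; rewrite (h p pY).
Qed.

Lemma cards_disjU (T : finType) (A C : {set T}) : [disjoint A & C] -> #|A :|: C| = #|A| + #|C|.
Proof. by move=> /disjoint_setI0 h; rewrite -cardsUI h cards0 addn0. Qed.

Lemma ar_step s b c z b' c' :
  2 * (s + b + 1) <= (b + 2) * (b + 1) + 2 * c ->
  b <= b' -> c <= c' -> z <= b' + 1 -> (b' = b -> z <= 1) -> (0 < z -> c < c') ->
  2 * (s + z + b' + 1) <= (b' + 2) * (b' + 1) + 2 * c'.
Proof.
move=> h1 h2 h3 h4 h5 h6.
case: (posnP z) => hz.
  rewrite hz; nia.
case: (ltngtP b' b) => hb; first lia.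
  have hd : (b' + 2) * (b' + 1) = (b + 2) * (b + 1) + (b' - b) * (b' + b + 3) by nia.
  have h6' := h6 hz.
  have : 2 * b' + 2 * (b' - b) <= (b' - b) * (b' + b + 3) by nia.
  nia.
have := h5 hb; rewrite hb; have := h6 hz; nia.
Qed.

Lemma PB (Y : {set P}) : (forall p, p \in Y -> p.1 <= p.2) ->
  2 * (#|Y| + #|Br Y| + 1) <= (#|Br Y| + 2) * (#|Br Y| + 1) + 2 * #|Cov Y|.
Proof.
move=> hY.
pose Yx (x : nat) := [set p in Y | p.2 < x].
suff H : forall x, x <= B -> 2 * (#|Yx x| + #|Br (Yx x)| + 1) <= (#|Br (Yx x)| + 2) * (#|Br (Yx x)| + 1) + 2 * #|Cov (Yx x)|.
  have -> : Y = Yx B by apply/setP => p; rewrite !inE ltn_ord andbT.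
  exact: H.
elim=> [_|x IH hx].
  have -> : Yx 0 = set0 by apply/setP => p; rewrite !inE ltn0 andbF.
  have -> : Br set0 = set0 by apply/setP => t; rewrite !inE; apply/existsP => [[p]]; rewrite inE.
  have -> : Cov set0 = set0 by apply/setP => t; rewrite !inE; apply/existsP => [[p]]; rewrite inE.
  by rewrite !cards0.
have hxB : x < B by [].
pose xo := Ordinal hxB.
pose Z := [set p in Y | p.2 == x :> nat].
have hU : Yx x.+1 = Yx x :|: Z.
  by apply/setP => p; rewrite !inE ltnS leq_eqVlt orbC; case: (p \in Y).
have hdis : [disjoint Yx x & Z].
  rewrite -setI_eq0; apply/eqP/setP => p; rewrite !inE.
  by case: (p \in Y) => //=; case: ltngtP.
have hsub : Yx x \subset Yx x.+1 by rewrite hU subsetUl.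
have hb := subset_leq_card (Br_sub hsub).
have hc := subset_leq_card (Cov_sub hsub).
have hcard : #|Yx x.+1| = #|Yx x| + #|Z| by rewrite hU cards_disjU.
rewrite hcard.
apply: ar_step (IH (ltnW hx)) hb hc _ _ _.
- (* #|Z| <= b' + 1 *)
  have hinj : {in Z &, injective (fun p : P => p.1)}.
    move=> p q; rewrite !inE => /andP [_ /eqP hp] /andP [_ /eqP hq] h.
    by apply/injective_projections => //; apply: val_inj; rewrite /= hp hq.
  rewrite -(card_in_imset hinj).
  apply: (@leq_trans #|xo |: Br (Yx x.+1)|); last by rewrite cardsU1 addnC leq_add2l leq_b1.
  apply: subset_leq_card; apply/subsetP => t /imsetP [p pZ ->].
  move: (pZ); rewrite !inE => /andP [pY /eqP p2].
  case: (ltngtP p.1 x) => h.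
  + apply/orP; right; apply/existsP; exists p; rewrite !inE pY p2 ltnSn leqnn h /= //.
  + by have := hY p pY; lia.
  + by apply/orP; left; apply/eqP; apply: val_inj.
- (* b' = b -> #|Z| <= 1 *)
  move=> hbb.
  have hZ : forall p, p \in Z -> p = (xo, xo).
    move=> p; rewrite !inE => /andP [pY /eqP p2].
    have hp1 := hY p pY.
    case: (ltngtP p.1 x) => h.
    + exfalso.
      have hsubB := Br_sub hsub.
      have heq : Br (Yx x) = Br (Yx x.+1) by apply/eqP; rewrite eqEcard hsubB hbb leqnn.
      have hxm : (x - 1) < B by lia.
      have : Ordinal hxm \in Br (Yx x.+1).
        rewrite inE; apply/existsP; exists p; rewrite !inE pY p2 ltnSn /=.
        apply/andP; split; rewrite /=; [by move/(leq_sub2r 1): h; rewrite subn1 | lia].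
      rewrite -heq inE => /existsP [q]; rewrite !inE => /andP [/andP [_ hq] /andP [_ hq2]].
      move: hq hq2 => /= hq hq2; lia.
    + by rewrite p2 in hp1; lia.
    + by apply/injective_projections; apply: val_inj; rewrite /= ?p2.
  apply: (@leq_trans #|[set (xo, xo)]|); last by rewrite cards1.
  by apply: subset_leq_card; apply/subsetP => p /hZ ->; rewrite inE.
- (* 0 < #|Z| -> c < c' *)
  move=> /card_gt0P [p pZ].
  have hp : xo \in Cov (Yx x.+1).
    move: (pZ); rewrite !inE => /andP [pY /eqP p2].
    apply/existsP; exists p; rewrite !inE pY p2 ltnSn /= leqnn andbT.
    by have := hY p pY; rewrite p2.
  have hnp : xo \notin Cov (Yx x).
    rewrite inE; apply/existsP => [[q]]; rewrite !inE => /andP [/andP [_ hq] /andP [_ hq2]].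
    move: hq hq2 => /= hq hq2; lia.
  apply: proper_card; apply/properP; split; first exact: Cov_sub.
  by exists xo.
Qed.

Lemma BrCov (Y : {set P}) (p0 : P) : p0 \in Y -> (forall p, p \in Y -> p.1 <= p.2) ->
  #|Br Y| < #|Cov Y|.
Proof.
move=> p0Y hY.
have hsub : Br Y \subset Cov Y.
  apply/subsetP => t; rewrite !inE => /existsP [p /andP [pY /andP [h1 h2]]].
  by apply/existsP; exists p; rewrite pY h1 ltnW.
have t0C : p0.2 \in Cov Y by rewrite inE; apply/existsP; exists p0; rewrite p0Y (hY p0 p0Y) leqnn.
pose tm := [arg max_(t > p0.2 in Cov Y) (t : nat)].
have [tC tmax] : tm \in Cov Y /\ forall t, t \in Cov Y -> (t : nat) <= tm.
  rewrite /tm; case: arg_maxnP => //.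
apply: proper_card; apply/properP; split => //; exists tm => //.
rewrite inE; apply/existsP => [[q /andP [qY /andP [h1 h2]]]].
have : q.2 \in Cov Y by rewrite inE; apply/existsP; exists q; rewrite qY (hY q qY) leqnn.
move/tmax; lia.
Qed.

End PB.

Definition offB n k b1 b2 (i : nat) := if i == 0 then 0 else if i == 1 then b2 - k else n + b1.
Definition topB n k b1 b2 (i : nat) := if i == 0 then b2 - n else if i == 1 then k + b1 else 2 * k.
Definition csB n k b1 b2 (i : nat) :=
  if i == 0 then 0 else if i == 1 then b2 - n + 1 else (b2 - n + 1) + (2 * k + b1 - b2 + 1).
Definition blkB n k b1 b2 (a : nat) := if a <= b2 - n then 0 else if a <= k + b1 then 1 else 2.

Lemma blk_lt3 n k b1 b2 a : blkB n k b1 b2 a < 3.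
Proof. by rewrite /blkB; case: ifP => //; case: ifP. Qed.

Lemma blk_ar n k b1 b2 a b : k < n -> n <= 2 * k -> b1 < k < b2 -> b2 <= 2 * k -> n + b1 <= b2 ->
  (a <= b <= b2 - n) \/ (b2 - k <= a /\ a <= b <= k + b1) \/ (n + b1 <= a /\ a <= b <= 2 * k) ->
  offB n k b1 b2 (blkB n k b1 b2 a) <= a /\ a <= b /\ b <= topB n k b1 b2 (blkB n k b1 b2 a).
Proof.
move=> *; rewrite /blkB /offB /topB.
case: (leqP a (b2 - n)) => h1 /=; first lia.
case: (leqP a (k + b1)) => h2 /=; lia.
Qed.

Lemma modeq3 M x y : x < M + M -> y < M + M -> x %% M = y %% M ->
  x = y \/ x = y + M \/ y = x + M.
Proof.
move=> hx hy; rewrite (@modnNN x) // (@modnNN y) //.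
case: ifP => h1; case: ifP => h2; lia.
Qed.

Lemma grid_lt n k b1 b2 i t c : k < n -> n <= 2 * k -> b1 < k < b2 -> b2 <= 2 * k -> n + b1 <= b2 ->
  i < 3 -> t <= topB n k b1 b2 i - offB n k b1 b2 i -> c <= 1 ->
  2 * (csB n k b1 b2 i + t) + c < (4 * k + 3 - 2 * n) + (4 * k + 3 - 2 * n).
Proof.
move=> h1 h2 h3 h4 h5 hi ht hc; move: hi ht; rewrite /csB /topB /offB.
case: i => [|[|[|i]]] //= *; lia.
Qed.

Lemma grid_inj n k b1 b2 i t t' c c' : k < n -> n <= 2 * k -> b1 < k < b2 -> b2 <= 2 * k -> n + b1 <= b2 ->
  i < 3 -> t <= topB n k b1 b2 i - offB n k b1 b2 i -> c <= 1 ->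
  t' <= topB n k b1 b2 i - offB n k b1 b2 i -> c' <= 1 ->
  (2 * (csB n k b1 b2 i + t) + c) %% (4 * k + 3 - 2 * n) =
  (2 * (csB n k b1 b2 i + t') + c') %% (4 * k + 3 - 2 * n) -> t = t' /\ c = c'.
Proof.
move=> h1 h2 h3 h4 h5 hi ht hc ht' hc' /modeq3.
move=> /(_ (grid_lt h1 h2 h3 h4 h5 hi ht hc) (grid_lt h1 h2 h3 h4 h5 hi ht' hc')).
move: ht ht'; rewrite /csB /topB /offB.
case: i hi => [|[|[|i]]] //= *; lia.
Qed.

Lemma cross_all n k b1 b2 i j a b a' b' t t' c c' :
  k < n -> n <= 2 * k -> b1 < k < b2 -> b2 <= 2 * k -> n + b1 <= b2 ->
  i < 3 -> j < 3 -> i != j ->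
  offB n k b1 b2 i <= a -> a <= b -> b <= topB n k b1 b2 i ->
  offB n k b1 b2 j <= a' -> a' <= b' -> b' <= topB n k b1 b2 j ->
  a - offB n k b1 b2 i <= t -> t + c <= b - offB n k b1 b2 i -> c <= 1 ->
  a' - offB n k b1 b2 j <= t' -> t' + c' <= b' - offB n k b1 b2 j -> c' <= 1 ->
  (2 * (csB n k b1 b2 i + t) + c) %% (4 * k + 3 - 2 * n) =
  (2 * (csB n k b1 b2 j + t') + c') %% (4 * k + 3 - 2 * n) ->
  k < cd (n + k) a b' /\ k < cd (n + k) a' b.
Proof.
move=> h1 h2 h3 h4 h5 hi hj hij ha1 ha2 ha3 hb1 hb2 hb3 ht1 ht2 hc ht1' ht2' hc'.
have hgt := grid_lt h1 h2 h3 h4 h5 hi _ hc.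
have hgt' := grid_lt h1 h2 h3 h4 h5 hj _ hc'.
move=> /modeq3 H.
have {H} := H (hgt t ltac:(lia)) (hgt' t' ltac:(lia)).
move: ha1 ha3 hb1 hb3 ht1 ht2 ht1' ht2' hgt hgt'; rewrite /csB /topB /offB.
case: i hi hij => [|[|[|i]]] //; case: j hj => [|[|[|j]]] //= *;
  rewrite /cd; do 2 case: ifP => ?; lia.
Qed.

Lemma final_ar n k s0 s1 s2 c0 c1 c2 d0 d1 d2 :
  k < n -> n <= 2 * k ->
  2 * (s0 + d0 + 1) <= (d0 + 2) * (d0 + 1) + 2 * c0 ->
  2 * (s1 + d1 + 1) <= (d1 + 2) * (d1 + 1) + 2 * c1 ->
  2 * (s2 + d2 + 1) <= (d2 + 2) * (d2 + 1) + 2 * c2 ->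
  d0 < c0 -> d1 < c1 -> d2 < c2 ->
  c0 + d0 + (c1 + d1) + (c2 + d2) <= 4 * k + 3 - 2 * n ->
  2 * (s0 + s1 + s2) <= 4 + (2 * k + 2 - n) * (2 * k + 1 - n).
Proof.
move=> h1 h2 e0 e1 e2 f0 f1 f2 hs.
have -> : 2 * k + 1 - n = (2 * k + 2 - n) - 1 by lia.
pose L := 2 * k + 2 - n; have hLdef : L = 2 * k + 2 - n by []; clearbody L; rewrite -hLdef.
have hL : 4 * k + 3 - 2 * n = 2 * L - 1 by lia.
rewrite hL in hs.
have E : forall d, (d + 2) * (d + 1) = d * d + 3 * d + 2 by move=> d; nia.
rewrite !E in e0 e1 e2.
have hsq : d0 * d0 + d1 * d1 + d2 * d2 <= (d0 + d1 + d2) * (d0 + d1 + d2) by nia.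
pose D := d0 + d1 + d2; have hD : D = d0 + d1 + d2 by []; clearbody D; rewrite -hD in hsq.
have hDL : D + 2 <= L by lia.
have hq : D * D + 5 * L <= L * L + 6 + D.
  have [e he] : exists e, L = D + 2 + e by exists (L - (D + 2)); lia.
  rewrite he; case: e {he} => [|e]; nia.
have -> : L * (L - 1) = L * L - L by rewrite mulnBr muln1.
lia.
Qed.

Lemma revF_facts n k a1 b1 a2 b2 a3 : revF n k a1 b1 a2 b2 a3 ->
  [/\ b1 < k < b2, b2 <= 2 * k & n + b1 <= b2].
Proof. rewrite /revF => [[? [? [? ?]]]]; split; lia. Qed.

Lemma revF_blk n k a1 b1 a2 b2 a3 : k < n -> revF n k a1 b1 a2 b2 a3 ->
  [/\ blkB n k b1 b2 a1 = 0, blkB n k b1 b2 a3 = 1 & blkB n k b1 b2 a2 = 2].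
Proof.
rewrite /revF /blkB => h [? [? [? [? [? ?]]]]].
split; repeat (case: ifP => ?); lia.
Qed.

Section Main.
Variables n k : nat.
Local Notation N := (n + k).
Local Notation P := ('I_N * 'I_N)%type.

Definition mkO (x : 'I_N) (o : nat) : 'I_N := Ordinal (leq_ltn_trans (leq_subr o x) (ltn_ord x)).
Definition loc (o : nat) (w : P) : P := (mkO w.1 o, mkO w.2 o).

Lemma compat (S : {set P}) u w : independent S -> u \in S -> w \in S ->
  cd N w.1 u.2 <= k \/ cd N u.1 w.2 <= k.
Proof.
move=> /indepP [_ gS] uS wS; have := gS w u wS uS; rewrite /R !incE negb_and !negbK.
by case/orP; [left|right].
Qed.

Lemma loc_inj (X : {set P}) o : (forall w, w \in X -> o <= w.1 /\ o <= w.2) ->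
  {in X &, injective (loc o)}.
Proof.
move=> h w w' wX w'X e; move: (congr1 (fun p => val p.1) e) (congr1 (fun p => val p.2) e) => /= e1 e2.
have [h1 h2] := h w wX; have [h1' h2'] := h w' w'X.
apply/injective_projections; apply: ord_inj; [rewrite -(subnK h1) -(subnK h1') e1 | rewrite -(subnK h2) -(subnK h2') e2] => //.
Qed.


Lemma blk_range (S : {set P}) (u1 u2 u3 w : P) :
  k < n -> n <= 2 * k -> independent S -> u1 \in S -> u2 \in S -> u3 \in S -> w \in S ->
  (u3.2 : nat) = k -> revF n k u1.1 u1.2 u2.1 u2.2 u3.1 ->
  offB n k u1.2 u2.2 (blkB n k u1.2 u2.2 w.1) <= w.1 /\ w.1 <= w.2 /\
  w.2 <= topB n k u1.2 u2.2 (blkB n k u1.2 u2.2 w.1).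
Proof.
move=> hkn hn2 hS h1 h2 h3 hw hb3 hrev.
have [F1 F2 F3] := revF_facts hrev.
apply: blk_ar => //.
have [iS _] := indepP hS.
have hk0 : 0 < k by move: F1; clear; lia.
have hkN : k < N by move: hkn; clear; lia.
apply: (@blockB n k u1.1 u1.2 u2.1 u2.2 u3.1) => //.
- by rewrite -incE; apply: iS.
- exact: compat hS h1 hw.
- exact: compat hS h2 hw.
- by move: (compat hS h3 hw); rewrite hb3.
Qed.


Lemma mkdisj (T : finType) (A B : {set T}) :
  (forall x, x \in A -> x \in B -> False) -> [disjoint A & B].
Proof.
move=> h; rewrite -setI_eq0; apply/eqP/setP => x; rewrite !inE.
by apply/negbTE/negP => /andP [xA xB]; apply: h xA xB.
Qed.

Lemma cards3 (T : finType) (A B C : {set T}) :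
  (forall x, x \in A -> x \in B -> False) -> (forall x, x \in A -> x \in C -> False) ->
  (forall x, x \in B -> x \in C -> False) -> #|A :|: B :|: C| = #|A| + #|B| + #|C|.
Proof.
move=> hab hac hbc; rewrite cards_disjU; last first.
  by apply: mkdisj => x; rewrite inE => /orP [xA|xB]; [apply: hac|apply: hbc].
rewrite cards_disjU //; apply: mkdisj; exact: hab.
Qed.

Lemma mainM (S : {set P}) (u1 u2 u3 : P) :
  k < n -> n <= 2 * k -> independent S -> u1 \in S -> u2 \in S -> u3 \in S ->
  (u3.2 : nat) = k -> revF n k u1.1 u1.2 u2.1 u2.2 u3.1 ->
  2 * #|S| <= 4 + (2 * k + 2 - n) * (2 * k + 1 - n).
Proof.
move=> hkn hn2 hS h1 h2 h3 hb3 hrev.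
have [F1 F2 F3] := revF_facts hrev.
have [B0 B1 B2] := revF_blk hkn hrev.
have hR w (wS : w \in S) := @blk_range S u1 u2 u3 w hkn hn2 hS h1 h2 h3 wS hb3 hrev.
have [iS gS] := indepP hS.
move: F1 F2 F3 B0 B1 B2 hR; move: (u1.2 : nat) (u2.2 : nat) => b1 b2 F1 F2 F3 B0 B1 B2 hR.
pose blk (w : P) := blkB n k b1 b2 w.1.
pose off := offB n k b1 b2; pose top := topB n k b1 b2; pose cs := csB n k b1 b2.
pose X (i : nat) := [set w in S | blk w == i].
pose Y (i : nat) := loc (off i) @: X i.
have hX : forall i w, w \in X i -> [/\ w \in S, blk w = i, off i <= w.1, w.1 <= w.2 & w.2 <= top i].
  move=> i w; rewrite inE => /andP [wS /eqP bw].
  by have [? [? ?]] := hR w wS; rewrite -bw; split.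
have hXY : forall i, #|Y i| = #|X i|.
  move=> i; apply: card_in_imset; apply: loc_inj => w /hX [_ _ ha hb _]; split => //; exact: leq_trans ha hb.
have hY : forall i p, p \in Y i ->
    exists w, [/\ w \in S, blk w = i, (p.1 : nat) = w.1 - off i, (p.2 : nat) = w.2 - off i &
      [/\ off i <= w.1, w.1 <= w.2 & w.2 <= top i]].
  move=> i p /imsetP [w wX ->]; have [? ? ? ? ?] := hX i w wX.
  by exists w; split.
have hYle : forall i p, p \in Y i -> p.1 <= p.2 /\ p.2 <= top i - off i.
  move=> i p /hY [w [_ _ -> -> [? ? ?]]]; split; [exact: leq_sub2r | exact: leq_sub2r].
have hYle1 : forall i p, p \in Y i -> p.1 <= p.2 by move=> i p /hYle [].
have hS3 : #|S| = #|X 0| + #|X 1| + #|X 2|.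
  rewrite -cards3.
  - apply: eq_card => w; rewrite !inE.
    case wS : (w \in S) => //=; rewrite /blk; have := blk_lt3 n k b1 b2 w.1.
    by case: (blkB n k b1 b2 w.1) => [|[|[|]]].
  - by move=> w; rewrite !inE => /andP [_ /eqP ->] /andP [_ /eqP].
  - by move=> w; rewrite !inE => /andP [_ /eqP ->] /andP [_ /eqP].
  - by move=> w; rewrite !inE => /andP [_ /eqP ->] /andP [_ /eqP].
have Mpos : 0 < 4 * k + 3 - 2 * n by move: hn2; clear; lia.
pose M := 4 * k + 3 - 2 * n.
pose gmap (i t c : nat) : 'I_M := Ordinal (ltn_pmod (2 * (cs i + t) + c) Mpos).
pose Img (i : nat) := [set gmap i (nat_of_ord t) 0 | t : 'I_N in Cov (Y i)] :|: [set gmap i (nat_of_ord t) 1 | t : 'I_N in Br (Y i)].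
have hCov : forall i (t : 'I_N), t \in Cov (Y i) -> exists w, [/\ w \in S, blk w = i,
    w.1 - off i <= t, t + 0 <= w.2 - off i & [/\ off i <= w.1, w.1 <= w.2 & w.2 <= top i]].
  move=> i t; rewrite inE => /existsP [p /andP [pY /andP [ht1 ht2]]].
  have [w [wS bw e1 e2 hw]] := hY i p pY.
  by exists w; split => //; rewrite -?e1 -?e2 ?addn0.
have hBr : forall i (t : 'I_N), t \in Br (Y i) -> exists w, [/\ w \in S, blk w = i,
    w.1 - off i <= t, t + 1 <= w.2 - off i & [/\ off i <= w.1, w.1 <= w.2 & w.2 <= top i]].
  move=> i t; rewrite inE => /existsP [p /andP [pY /andP [ht1 ht2]]].
  have [w [wS bw e1 e2 hw]] := hY i p pY.
  by exists w; split => //; rewrite -?e1 -?e2 ?addn1.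
have tle : forall (i t c : nat) (w : P), t + c <= w.2 - off i -> w.2 <= top i -> t <= top i - off i.
  move=> i t c w q1 q2; exact: leq_trans (leq_trans (leq_addr c t) q1) (leq_sub2r (off i) q2).
have hI3 : forall i, i < 3 -> forall t t' c c', t <= top i - off i -> c <= 1 ->
    t' <= top i - off i -> c' <= 1 -> gmap i t c = gmap i t' c' -> t = t' /\ c = c'.
  move=> i hi t t' c c' ht hc ht' hc' /(congr1 val) /= e.
  exact: (@grid_inj n k b1 b2 i t t' c c').
have hImg : forall i, i < 3 -> #|Img i| = #|Cov (Y i)| + #|Br (Y i)|.
  move=> i hi; rewrite cards_disjU; last first.
    apply: mkdisj => g /imsetP [t tC ->] /imsetP [t' tB].
    have [w [_ bw _ q1 [_ _ q2]]] := hCov i t tC.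
    have [w' [_ bw' _ q1' [_ _ q2']]] := hBr i t' tB.
    by move=> /(hI3 i hi) [] // ; [exact: tle q1 q2 | exact: tle q1' q2'].
  congr (_ + _); apply: card_in_imset => t t' tC t'C /(hI3 i hi) [] //.
  + by have [w [_ _ _ q1 [_ _ q2]]] := hCov i t tC; exact: tle q1 q2.
  + by have [w [_ _ _ q1 [_ _ q2]]] := hCov i t' t'C; exact: tle q1 q2.
  + by move=> e _; apply: ord_inj.
  + by have [w [_ _ _ q1 [_ _ q2]]] := hBr i t tC; exact: tle q1 q2.
  + by have [w [_ _ _ q1 [_ _ q2]]] := hBr i t' t'C; exact: tle q1 q2.
  + by move=> e _; apply: ord_inj.
have wit : forall l g, g \in Img l -> exists w t c, [/\ w \in S, blk w = l, c <= 1,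
    w.1 - off l <= t & t + c <= w.2 - off l] /\
    [/\ off l <= w.1, w.1 <= w.2, w.2 <= top l & (g : nat) = (2 * (cs l + t) + c) %% M].
  move=> l g; rewrite inE => /orP [/imsetP [t tC ->]|/imsetP [t tB ->]].
  - have [w [wS bw o1 o2 [o3 o4 o5]]] := hCov l t tC.
    by exists w, t, 0; split; split.
  - have [w [wS bw o1 o2 [o3 o4 o5]]] := hBr l t tB.
    by exists w, t, 1; split; split.
have hdis : forall i j, i < 3 -> j < 3 -> i != j -> forall g, g \in Img i -> g \in Img j -> False.
  move=> i j hi hj hij g.
  move=> /wit [w [t [c [[wS bw hc ht1 ht2] [o1 o2 o3 e]]]]].
  move=> /wit [w' [t' [c' [[w'S bw' hc' ht1' ht2'] [o1' o2' o3' e']]]]].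
  have ee : (2 * (cs i + t) + c) %% M = (2 * (cs j + t') + c') %% M by rewrite -e -e'.
  have [x1 x2] := @cross_all n k b1 b2 i j w.1 w.2 w'.1 w'.2 t t' c c' hkn hn2 F1 F2 F3
     hi hj hij o1 o2 o3 o1' o2' o3' ht1 ht2 hc ht1' ht2' hc' ee.
  by have := gS w w' wS w'S; rewrite /R !incE -!ltnNge x1 x2.
have hsum : #|Img 0| + #|Img 1| + #|Img 2| <= M.
  rewrite -cards3; first by apply: leq_trans (max_card _) _; rewrite card_ord.
  - by move=> x; apply: hdis.
  - by move=> x; apply: hdis.
  - by move=> x; apply: hdis.
have y0 : loc (off 0) u1 \in Y 0 by apply: imset_f; rewrite inE h1 /blk B0.
have y1 : loc (off 1) u3 \in Y 1 by apply: imset_f; rewrite inE h3 /blk B1.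
have y2 : loc (off 2) u2 \in Y 2 by apply: imset_f; rewrite inE h2 /blk B2.
have c0 := BrCov y0 (hYle1 0); have c1 := BrCov y1 (hYle1 1); have c2 := BrCov y2 (hYle1 2).
have p0 := PB (hYle1 0); have p1 := PB (hYle1 1); have p2 := PB (hYle1 2).
rewrite (hImg 0) // (hImg 1) // (hImg 2) // in hsum.
rewrite hS3 -!hXY.
exact: (final_ar hkn hn2 p0 p1 p2 c0 c1 c2 hsum).
Qed.

End Main.


Theorem theorem1p5 (n k : nat) (S : {set 'I_(n + k) * 'I_(n + k)}) :
  3 <= n -> k < n -> n <= 2 * k ->
  independent S -> ~ reversible S ->
  2 * #|S| <= 4 + (2 * k + 2 - n) * (2 * k + 1 - n).
Proof.
move=> hn hkn hn2 hS hnr.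
have [p [q [r [pS qS rS [h1 h2 h3]]]]] := cycle_of_nonrev hkn hS hnr.
have [S' [u1 [u2 [u3 [hS' cS [m1 m2 m3] [r1 r2 r3] [hb3 hrev]]]]]] :=
  reduce hn hkn hn2 hS pS qS rS h1 h2 h3.
rewrite -cS; exact: mainM hkn hn2 hS' m1 m2 m3 hb3 hrev.
Qed.
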